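(* Let $G$ be a finite group and $H\le G$ a subgroup. If $H$ is mixable and the action of $G$ on the coset space $G/H$ (by left multiplication) is mixable, then $G$ is mixable and \[\mathrm{mixlen}(G)\le \mathrm{mixlen}(H)+\mathrm{mixlen}(G,G/H).\]
   Context: For a finite group $G$, a random subproduct is a random element $g_1^{\epsilon_1}\cdots g_k^{\epsilon_k}$ with $g_1,\dots,g_k\in G$ fixed and $\epsilon_1,\dots,\epsilon_k$ independent Bernoulli random variables, $\epsilon_i\sim\mathrm{Ber}(p_i)$, $p_i\in[0,1]$; $k$ is its length. $G$ is mixable if some random subproduct is exactly uniform on $G$, and $\mathrm{mixlen}(G)$ is the minimal length of such. For a transitive action of $G$ on a finite set $X$, the action is mixable if for some (equivalently every) $x_0\in X$ there is a random subproduct $\mathbf{g}$ with $\mathbf{g}x_0$ uniform on $X$; $\mathrm{mixlen}(G,X)$ is the minimal length of such a random subproduct. *)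

(* Defs.v *)
From HB Require Import structures.
From mathcomp Require Import all_boot all_order all_algebra all_fingroup.
From mathcomp Require Import reals.
Set Implicit Arguments. Unset Strict Implicit. Unset Printing Implicit Defensive.
Import Order.TTheory GRing.Theory Num.Theory.

Section RandomSubproducts.
Variables (R : realType) (gT : finGroupType).

Definition subprod (k : nat) (g : 'I_k -> gT) (e : {ffun 'I_k -> bool}) : gT :=
  (\prod_(i < k) (if e i then g i else 1))%g.

(* Probability of the outcome e for independent e_i ~ Ber(p_i). *)
Definition outcome_weight (k : nat) (p : 'I_k -> R) (e : {ffun 'I_k -> bool}) : R :=
  (\prod_(i < k) (if e i then p i else 1 - p i))%R.

Definition probs_ok (k : nat) (p : 'I_k -> R) : Prop :=
  forall i, (0 <= p i <= 1)%R.

Definition subprod_prob (k : nat) (g : 'I_k -> gT) (p : 'I_k -> R) (x : gT) : R :=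
  (\sum_(e : {ffun 'I_k -> bool} | subprod g e == x) outcome_weight p e)%R.

Definition mixable_len (G : {group gT}) (k : nat) : Prop :=
  exists (g : 'I_k -> gT) (p : 'I_k -> R),
    (forall i, g i \in G) /\ probs_ok p /\
    (forall x, x \in G -> subprod_prob g p x = (#|G|%:R)^-1)%R.

Definition mixable (G : {group gT}) : Prop := exists k, mixable_len G k.

Definition is_mixlen (G : {group gT}) (n : nat) : Prop :=
  mixable_len G n /\ forall m, mixable_len G m -> n <= m.

Variable aT : finType.

Definition subprod_act_prob (act : gT -> aT -> aT) (k : nat) (g : 'I_k -> gT)
    (p : 'I_k -> R) (x0 y : aT) : R :=
  (\sum_(e : {ffun 'I_k -> bool} | act (subprod g e) x0 == y) outcome_weight p e)%R.

Definition act_mixable_len (G : {group gT}) (act : gT -> aT -> aT) (X : {set aT})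
    (k : nat) : Prop :=
  exists x0, x0 \in X /\
  exists (g : 'I_k -> gT) (p : 'I_k -> R),
    (forall i, g i \in G) /\ probs_ok p /\
    (forall y, y \in X -> subprod_act_prob act g p x0 y = (#|X|%:R)^-1)%R.

Definition act_mixable (G : {group gT}) act X : Prop :=
  exists k, act_mixable_len G act X k.

Definition is_act_mixlen (G : {group gT}) act X (n : nat) : Prop :=
  act_mixable_len G act X n /\ forall m, act_mixable_len G act X m -> n <= m.

End RandomSubproducts.

Definition lmul_act (gT : finGroupType) (g : gT) (A : {set gT}) : {set gT} := (g *: A)%g.

(* Main.v *)
Require Import Defs.
From mathcomp Require Import all_boot all_order all_algebra all_fingroup.
From mathcomp Require Import reals.
Set Implicit Arguments. Unset Strict Implicit. Unset Printing Implicit Defensive.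
Import Order.TTheory GRing.Theory Num.Theory.

Section Aux.
Variables (R : realType) (gT : finGroupType).
Local Open Scope ring_scope.

Definition catf (T : Type) m n (a : 'I_m -> T) (b : 'I_n -> T) (i : 'I_(m + n)) : T :=
  match split i with inl j => a j | inr j => b j end.

Definition cate m n (e1 : {ffun 'I_m -> bool}) (e2 : {ffun 'I_n -> bool}) :
  {ffun 'I_(m + n) -> bool} := [ffun i => catf e1 e2 i].

Lemma catf_l (T : Type) m n (a : 'I_m -> T) (b : 'I_n -> T) j : catf a b (lshift n j) = a j.
Proof. by rewrite /catf (unsplitK (inl _ j)). Qed.
Lemma catf_r (T : Type) m n (a : 'I_m -> T) (b : 'I_n -> T) j : catf a b (rshift m j) = b j.
Proof. by rewrite /catf (unsplitK (inr _ j)). Qed.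

Lemma subprod_cat m n (g1 : 'I_m -> gT) (g2 : 'I_n -> gT) e1 e2 :
  subprod (catf g1 g2) (cate e1 e2) = (subprod g1 e1 * subprod g2 e2)%g.
Proof.
rewrite /subprod big_split_ord /=.
congr (_ * _)%g; apply: eq_bigr => i _; by rewrite ffunE ?catf_l ?catf_r.
Qed.

Lemma weight_cat m n (p1 : 'I_m -> R) (p2 : 'I_n -> R) e1 e2 :
  outcome_weight (catf p1 p2) (cate e1 e2) = outcome_weight p1 e1 * outcome_weight p2 e2.
Proof.
rewrite /outcome_weight big_split_ord /=.
congr (_ * _); apply: eq_bigr => i _; by rewrite ffunE ?catf_l ?catf_r.
Qed.

Lemma sum_cat m n (F : {ffun 'I_(m + n) -> bool} -> R) :
  \sum_e F e = \sum_(e1 : {ffun 'I_m -> bool}) \sum_(e2 : {ffun 'I_n -> bool}) F (cate e1 e2).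
Proof.
rewrite pair_big /=.
pose h (q : {ffun 'I_m -> bool} * {ffun 'I_n -> bool}) := cate q.1 q.2.
have hb : bijective h.
  exists (fun e : {ffun 'I_(m + n) -> bool} =>
            ([ffun j => e (lshift n j)], [ffun j => e (rshift m j)])).
    case=> e1 e2; rewrite /h /=; congr pair; apply/ffunP => j;
      by rewrite !ffunE ?catf_l ?catf_r.
  move=> e; rewrite /h /=; apply/ffunP => i; rewrite !ffunE /catf.
  case: splitP => j ji; rewrite ffunE; congr (e _); apply/val_inj => //=.
by rewrite (reindex h (onW_bij _ hb)).
Qed.

Lemma subprod_conj k (g : 'I_k -> gT) (b : gT) e :
  subprod (fun i => g i ^ b)%g e = ((subprod g e) ^ b)%g.
Proof.
rewrite /subprod (big_morph (fun x => x ^ b)%g (fun x y => conjMg x y b) (conj1g b)).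
by apply: eq_bigr => i _; case: (e i); rewrite ?conj1g.
Qed.

Lemma prob_mixH (H : {group gT}) k (g : 'I_k -> gT) (p : 'I_k -> R) :
  (forall i, g i \in H) ->
  (forall x, x \in H -> subprod_prob g p x = (#|H|%:R)^-1) ->
  forall y, subprod_prob g p y = (y \in H)%:R * (#|H|%:R)^-1.
Proof.
move=> gH hp y; case: (boolP (y \in H)) => yH; first by rewrite hp // mul1r.
rewrite mul0r /subprod_prob big1 // => e /eqP He; case/negP: yH; rewrite -He.
by apply: group_prod => i _; case: (e i); rewrite ?gH ?group1.
Qed.

End Aux.

Theorem mainTheorem10 (R : realType) (gT : finGroupType) (G H : {group gT}) :
  H \subset G ->
  mixable R H ->
  act_mixable R G (@lmul_act gT) (lcosets H G) ->
  mixable R G /\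
  (forall nG nH nA : nat,
     is_mixlen R G nG -> is_mixlen R H nH ->
     is_act_mixlen R G (@lmul_act gT) (lcosets H G) nA ->
     nG <= nH + nA).
Proof.
move=> sHG.
have key : forall kH kA, mixable_len R H kH ->
    act_mixable_len R G (@lmul_act gT) (lcosets H G) kA -> mixable_len R G (kA + kH).
  move=> kH kA [gH [pH [gHH [pHok pHu]]]] [x0 [x0L [gA [pA [gAG [pAok pAu]]]]]].
  case/lcosetsP: x0L => a aG x0E.
  exists (catf gA (fun i => gH i ^ a^-1)%g), (catf pA pH); split; last split.
  - move=> i; rewrite /catf; case: split => j //.
    by rewrite groupJ ?groupV // (subsetP sHG).
  - by move=> i; rewrite /catf; case: split => j.
  move=> x xG.
  have yL : ((x * a) *: H)%g \in lcosets H G by apply/lcosetsP; exists (x * a)%g; rewrite ?groupM.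
  have hu := prob_mixH gHH pHu.
  rewrite -(Lagrange sHG) -card_lcosets natrM invfM -(pAu _ yL).
  rewrite /subprod_prob big_mkcond sum_cat /subprod_act_prob [in RHS]big_mkcond big_distrr /=.
  apply: eq_bigr => e1 _.
  under eq_bigr => e2 _ do rewrite subprod_cat weight_cat.
  have -> : (\sum_(e2 : {ffun 'I_kH -> bool})
      (if (subprod gA e1 * subprod (fun i => gH i ^ a^-1) e2)%g == x
       then outcome_weight pA e1 * outcome_weight pH e2 else 0))%R
    = (outcome_weight pA e1 * subprod_prob gH pH (((subprod gA e1)^-1 * x) ^ a)%g)%R.
    rewrite /subprod_prob big_distrr /= [in RHS]big_mkcond; apply: eq_bigr => e2 _.
    rewrite subprod_conj.
    have -> : ((subprod gA e1 * subprod gH e2 ^ a^-1)%g == x) =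
              (subprod gH e2 == (((subprod gA e1)^-1 * x) ^ a)%g).
      apply/eqP/eqP => [<-|->]; first by rewrite mulKg conjgKV.
      by rewrite conjgK mulKVg.
    by case: ifP; rewrite ?mulr0.
  rewrite hu.
  have -> : ((((subprod gA e1)^-1 * x) ^ a)%g \in H) =
            (lmul_act (subprod gA e1) x0 == ((x * a) *: H)%g).
    rewrite /lmul_act x0E -lcosetM; apply/idP/eqP => [h|e].
      apply/esym/lcoset_eqP; rewrite mem_lcoset.
      by move: h; rewrite invMg /conjg !mulgA.
    have : (x * a)%g \in ((subprod gA e1 * a) *: H)%g by rewrite e lcoset_refl.
    by rewrite mem_lcoset invMg /conjg !mulgA.
  by case: eqP => _; rewrite /= ?mul0r ?mulr0 ?mul1r // mulrC.
move=> [kH mH] [kA mA]; split; first by exists (kA + kH); exact: key.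
move=> nG nH nA [_ minG] [mH' _] [mA' _].
by rewrite addnC; apply: minG; apply: key.
Qed.
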